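(* Let $q$ be a prime and $b,c$ positive integers. (1) If $\frac{b+c}{\gcd(b,c)}=q$, then the threshold is $n_0(b,c;q)=\gcd(b,c)$. (2) If $\gcd(b,c)=1$ and $b+c=q^2$, then $n_0(b,c;q)=q+1$.
   Context: The Hamming graph $H(n,q)$ has vertex set $\mathbb{Z}_q^n$, two vertices adjacent iff they differ in exactly one coordinate. A $(b,c)$-coloring of $H(n,q)$ is a surjective map onto $\{1,2\}$ in which each color-1 vertex has exactly $b$ neighbours of color 2 and each color-2 vertex has exactly $c$ neighbours of color 1. The threshold $n_0(b,c;q)$ is the least $n$ such that a $(b,c)$-coloring of $H(n,q)$ exists (such colorings then exist for all $n\ge n_0$ and for no smaller $n$). *)

(* Defs.v *)
From mathcomp Require Import all_boot.
Set Implicit Arguments. Unset Strict Implicit. Unset Printing Implicit Defensive.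

Definition hvertex (n q : nat) : finType := {ffun 'I_n -> 'I_q}.

Definition hadj (n q : nat) (x y : hvertex n q) : bool :=
  #|[set i : 'I_n | x i != y i]| == 1.

(* Colours: [true] = colour 1, [false] = colour 2.
   Surjective onto {1,2}; each colour-1 vertex has exactly b colour-2
   neighbours; each colour-2 vertex has exactly c colour-1 neighbours. *)
Definition is_bc_coloring (n q b c : nat) (f : hvertex n q -> bool) : Prop :=
  [/\ (exists x, f x), (exists y, ~~ f y),
      (forall x, f x -> #|[set y | hadj x y & ~~ f y]| = b)
    & (forall y, ~~ f y -> #|[set x | hadj y x & f x]| = c)].

Definition has_bc_coloring (n q b c : nat) : Prop :=
  exists f : hvertex n q -> bool, is_bc_coloring b c f.

Definition is_threshold (b c q n0 : nat) : Prop :=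
  has_bc_coloring n0 q b c /\ (forall n, n < n0 -> ~ has_bc_coloring n q b c).

(* Main.v *)
Require Import Defs.
From mathcomp Require Import all_boot.
From mathcomp Require Import all_algebra zify ring lra.
Set Implicit Arguments. Unset Strict Implicit. Unset Printing Implicit Defensive.
Import GRing.Theory Num.Theory.


Section Basic.
Variables n q : nat.
Implicit Types x y : hvertex n q.

Definition upd x (i : 'I_n) (v : 'I_q) : hvertex n q :=
  [ffun k => if k == i then v else x k].

Lemma upd_eq x i v : upd x i v i = v.
Proof. by rewrite /upd ffunE eqxx. Qed.

Lemma upd_neq x i v k : k != i -> upd x i v k = x k.
Proof. by rewrite /upd ffunE => /negbTE ->. Qed.

Lemma hadjP x y : reflect (exists2 i, y i != x i & y = upd x i (y i)) (hadj x y).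
Proof.
rewrite /hadj; apply: (iffP idP).
- move/cards1P=> [i Hi].
  have Hi' : i \in [set k | x k != y k] by rewrite Hi set11.
  exists i; first by rewrite inE eq_sym in Hi'.
  apply/ffunP=> k; rewrite ffunE; case: eqP => [->//|/eqP kn].
  apply/eqP; apply: contraR kn => hk.
  have : k \in [set k | x k != y k] by rewrite inE eq_sym.
  by rewrite Hi inE.
- move=> [i Hi ->]; apply/cards1P; exists i; apply/setP=> k.
  rewrite !inE ffunE; case: (k =P i) => [->|_]; first by rewrite eq_sym Hi.
  by rewrite eqxx.
Qed.

Lemma card_nbr x (P : pred (hvertex n q)) :
  #|[set y | hadj x y & P y]| =
  #|[set p : 'I_n * 'I_q | (p.2 != x p.1) && P (upd x p.1 p.2)]|.
Proof.
rewrite -(@card_in_imset _ _ (fun p : 'I_n * 'I_q => upd x p.1 p.2)).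
  apply: eq_card => y; rewrite inE; apply/idP/imsetP.
  - move=> /andP[/hadjP[i Hi Ey] Py]; exists (i, y i) => //.
    by rewrite inE /= Hi -Ey.
  - move=> [[i v]]; rewrite inE /= => /andP[Hv Pv] ->; rewrite Pv andbT.
    by apply/hadjP; exists i; rewrite upd_eq.
move=> [i v] [j w]; rewrite !inE /= => /andP[Hv _] /andP[Hw _] E.
have ij : i = j.
  apply/eqP; apply: contraR Hv => ij.
  by rewrite -(upd_eq x i v) E upd_neq.
subst j; congr pair; by rewrite -(upd_eq x i v) E upd_eq.
Qed.

End Basic.


Lemma constr_col n q (G : finType) (s : hvertex n q -> G) (t : nat)
  (Hs : forall x (B : {set G}), #|[set y | hadj x y & s y \in B]| = t * #|B :\ s x|)
  (x0 : hvertex n q) (A : {set G}) :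
  0 < t -> 0 < #|A| -> #|A| < #|G| ->
  has_bc_coloring n q (t * (#|G| - #|A|)) (t * #|A|).
Proof.
move=> t0 A0 AG; exists (fun x => s x \in A).
have E1 x : s x \in A -> #|[set y | hadj x y & ~~ (s y \in A)]| = t * (#|G| - #|A|).
  move=> xA; rewrite -(cardsC A) addKn.
  have -> : #|~: A| = #|~: A :\ s x|.
    by rewrite (cardsD1 (s x)) inE xA.
  rewrite -Hs; apply: eq_card => y; by rewrite !inE.
have E2 x : ~~ (s x \in A) -> #|[set y | hadj x y & s y \in A]| = t * #|A|.
  move=> xA; have -> : #|A| = #|A :\ s x| by rewrite (cardsD1 (s x)) (negbTE xA).
  by rewrite -Hs.
have ex1 : exists x, s x \in A.
  case Hx0 : (s x0 \in A); first by exists x0.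
  have : 0 < #|[set y | hadj x0 y & s y \in A]| by rewrite E2 ?Hx0 // muln_gt0 t0.
  by case/card_gt0P=> y; rewrite inE => /andP[_ Hy]; exists y.
have ex2 : exists x, ~~ (s x \in A).
  case Hx0 : (s x0 \in A); last by exists x0; rewrite Hx0.
  have : 0 < #|[set y | hadj x0 y & ~~ (s y \in A)]|.
    by rewrite E1 ?Hx0 // muln_gt0 t0 subn_gt0.
  by case/card_gt0P=> y; rewrite inE => /andP[_ Hy]; exists y.
by split.
Qed.


Lemma Fp_nat_inj q a b : prime q -> a < q -> b < q -> (a%:R : 'F_q)%R = b%:R%R -> a = b.
Proof.
move=> hq ha hb /(congr1 (@nat_of_ord _)); rewrite !val_Fp_nat // !modn_small //.
Qed.

Lemma card_pair_sum (I J : finType) (P : I -> pred J) :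
  #|[set p : I * J | P p.1 p.2]| = \sum_i #|[set v | P i v]|.
Proof.
rewrite -sum1_card.
under [RHS]eq_bigr do rewrite -sum1_card.
rewrite pair_big_dep /=; apply: eq_bigl => p; by rewrite !inE.
Qed.

Lemma card_bij_pre (T G : finType) (f : T -> G) (P : pred G) :
  injective f -> #|T| = #|G| -> #|[set v | P (f v)]| = #|[set g | P g]|.
Proof.
move=> fi TG.
have surj g : exists v, f v = g.
  have : g \in f @: [set: T].
    have -> : f @: [set: T] = [set: G] by apply/eqP; rewrite eqEcard subsetT /= cardsT card_imset // cardsT TG.
    by rewrite inE.
  by case/imsetP=> v _ ->; exists v.
rewrite -(card_imset _ fi); apply: eq_card => g; rewrite inE.
apply/imsetP/idP => [[v]|Pg]; first by rewrite inE => Pv ->.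
by have [v Ev] := surj g; exists v; rewrite ?inE Ev.
Qed.

Section Syn.
Variables n q : nat.
Hypothesis hq : prime q.
Local Open Scope ring_scope.

Definition sigw (w : 'I_n -> 'F_q) (x : hvertex n q) : 'F_q :=
  \sum_k w k * (x k : nat)%:R.

Lemma sigw_upd w x i v :
  sigw w (upd x i v) = sigw w x + w i * ((v : nat)%:R - (x i : nat)%:R).
Proof.
rewrite /sigw (bigD1 i) //= [in RHS](bigD1 i) //= upd_eq.
rewrite (eq_bigr (fun k => w k * (x k : nat)%:R)); last first.
  by move=> k kn; rewrite upd_neq.
ring.
Qed.

Definition sig1 (x : hvertex n q) : 'F_q := sigw (fun _ => 1) x.

Lemma sig1_prop x (B : {set 'F_q}) :
  #|[set y | hadj x y & sig1 y \in B]| = (n * #|B :\ sig1 x|)%N.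
Proof.
rewrite card_nbr (card_pair_sum (fun i v => (v != x i) && (sig1 (upd x i v) \in B))).
rewrite (eq_bigr (fun _ => #|B :\ sig1 x|)); last first.
  move=> i _.
  pose f (v : 'I_q) := sig1 x + ((v : nat)%:R - (x i : nat)%:R).
  have fi : injective f.
    move=> v w; rewrite /f => /addrI /subIr /(Fp_nat_inj hq (ltn_ord _) (ltn_ord _)).
    exact: ord_inj.
  have fx : f (x i) = sig1 x by rewrite /f subrr addr0.
  have -> : B :\ sig1 x = [set g | (g != sig1 x) && (g \in B)] by apply/setP=> g; rewrite !inE.
  rewrite -(card_bij_pre (fun g => (g != sig1 x) && (g \in B)) fi); last by rewrite card_ord card_Fp.
  apply: eq_card => v; rewrite !inE /sig1 sigw_upd mul1r -/(sig1 x) -/(f v).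
  congr andb; apply/idP/idP; apply: contra.
  - by move/eqP; rewrite -fx => /fi ->.
  - by move/eqP=> ->; rewrite fx.
by rewrite sum_nat_const card_ord.
Qed.
End Syn.


Section Syn2.
Variable q : nat.
Hypothesis hq : prime q.
Local Open Scope ring_scope.

Definition h1 (i : 'I_q.+1) : 'F_q := if (i < q)%N then 1 else 0.
Definition h2 (i : 'I_q.+1) : 'F_q := if (i < q)%N then (i : nat)%:R else 1.
Definition sig2 (x : hvertex q.+1 q) : 'F_q * 'F_q := (sigw h1 x, sigw h2 x).

Lemma h_inj i j (d e : 'F_q) : d != 0 ->
  d * h1 i = e * h1 j -> d * h2 i = e * h2 j -> i = j /\ d = e.
Proof.
move=> d0; rewrite /h1 /h2.
case: (ltnP i q) => iq; case: (ltnP j q) => jq; rewrite ?mulr1 ?mulr0.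
- move=> de; subst e => E; split => //.
  apply: ord_inj; apply: (Fp_nat_inj hq iq jq).
  by move: E => /(mulfI d0).
- by move=> E; move: d0; rewrite E eqxx.
- by move=> <-; rewrite mul0r => E; move: d0; rewrite E eqxx.
- move=> _ de; split => //; apply: ord_inj.
  by have := ltn_ord i; have := ltn_ord j; lia.
Qed.

Lemma sig2_prop x (B : {set 'F_q * 'F_q}) :
  #|[set y | hadj x y & sig2 y \in B]| = (1 * #|B :\ sig2 x|)%N.
Proof.
rewrite mul1n card_nbr.
pose D := [set p : 'I_q.+1 * 'I_q | p.2 != x p.1].
pose phi (p : 'I_q.+1 * 'I_q) := sig2 (upd x p.1 p.2).
have phiE p : (phi p).1 = (sig2 x).1 + h1 p.1 * ((p.2 : nat)%:R - (x p.1 : nat)%:R)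
                   /\ (phi p).2 = (sig2 x).2 + h2 p.1 * ((p.2 : nat)%:R - (x p.1 : nat)%:R).
  by rewrite /phi /sig2 /= !sigw_upd.
have dnz p : p \in D -> (p.2 : nat)%:R - (x p.1 : nat)%:R != 0 :> 'F_q.
  rewrite inE => H; rewrite subr_eq0; apply: contra H => /eqP.
  by move/(Fp_nat_inj hq (ltn_ord _) (ltn_ord _))/ord_inj ->.
have phi_inj : {in D &, injective phi}.
  move=> [i v] [j w] Dp Dp' E.
  have [E1 E2] := phiE (i, v); have [F1 F2] := phiE (j, w).
  have := congr1 fst E; rewrite E1 F1 => /addrI; rewrite mulrC [RHS]mulrC => e1.
  have := congr1 snd E; rewrite E2 F2 => /addrI; rewrite mulrC [RHS]mulrC => e2.
  have [ij de] := h_inj (dnz _ Dp) e1 e2.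
  move: ij de => /= ij; subst j => /subIr/(Fp_nat_inj hq (ltn_ord _) (ltn_ord _))/ord_inj ->.
  by [].
have phiD : phi @: D = [set~ sig2 x].
  apply/eqP; rewrite eqEcard; apply/andP; split.
    apply/subsetP=> g /imsetP[p Dp ->]; rewrite !inE; apply/eqP=> E.
    have [E1 E2] := phiE p.
    have e1 : ((p.2 : nat)%:R - (x p.1 : nat)%:R) * h1 p.1 = 0 * h1 p.1.
      by rewrite mul0r mulrC; apply: (@addrI _ (sig2 x).1); rewrite -E1 E addr0.
    have e2 : ((p.2 : nat)%:R - (x p.1 : nat)%:R) * h2 p.1 = 0 * h2 p.1.
      by rewrite mul0r mulrC; apply: (@addrI _ (sig2 x).2); rewrite -E2 E addr0.
    have [_ d0] := h_inj (dnz _ Dp) e1 e2.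
    by move: (dnz _ Dp); rewrite d0 eqxx.
  rewrite cardsC1 card_in_imset // card_prod card_Fp //.
  rewrite /D (card_pair_sum (fun i v => v != x i)).
  rewrite (eq_bigr (fun _ => q.-1)); last first.
    move=> i _; have := cardsC1 (x i); rewrite card_ord => <-; apply: eq_card => v; by rewrite !inE.
  rewrite sum_nat_const card_ord; have := prime_gt0 hq; nia.
transitivity #|[set p in D | phi p \in B]|; first by apply: eq_card => p; rewrite !inE.
rewrite -(card_in_imset (f := phi) (D := [set p in D | phi p \in B])); last first.
  move=> p p'; rewrite !inE => /andP[Dp _] /andP[Dp' _]; apply: phi_inj; by rewrite ?inE.
apply: eq_card => g; rewrite !inE; apply/idP/andP.
- move=> /imsetP[p]; rewrite ?inE => /andP[Dp Bp] ->; split => //.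
  have : phi p \in phi @: D by apply: imset_f; rewrite inE.
  by rewrite phiD !inE.
- move=> [g1 gB]; have : g \in phi @: D by rewrite phiD !inE.
  case/imsetP=> p Dp Eg; apply/imsetP; exists p => //; rewrite !inE -Eg gB andbT; by move: Dp; rewrite !inE.
Qed.
End Syn2.


Lemma sum_cst (T : finType) (P : pred T) (k : int) :
  (\sum_(i | P i) k = k *+ #|[set i | P i]|)%R.
Proof.
rewrite (eq_bigl (fun i => i \in [set i | P i])); last by move=> i; rewrite inE.
by rewrite sumr_const.
Qed.

Section Lines.
Variables n q : nat.
Implicit Types x y z : hvertex n q.

Definition Rl (j : 'I_n) x y : bool := [forall k, (k != j) ==> (x k == y k)].

Lemma RlP j x y : reflect (forall k, k != j -> x k = y k) (Rl j x y).
Proof.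
apply: (iffP forallP) => H k; first by move=> kj; have := H k; rewrite kj => /eqP.
by apply/implyP => /H ->.
Qed.

Lemma Rl_sym j x y : Rl j x y = Rl j y x.
Proof. by apply/RlP/RlP => H k /H ->. Qed.

Lemma Rl_trans j x y z : Rl j x y -> Rl j y z = Rl j x z.
Proof.
move/RlP=> H; apply/RlP/RlP => H' k kj; first by rewrite H ?H'.
by rewrite -H ?H'.
Qed.

Lemma Rl_upd j x y : Rl j x y -> y = upd x j (y j).
Proof.
move/RlP=> H; apply/ffunP=> k; rewrite ffunE; case: (k =P j) => [->//|/eqP kj].
by rewrite H.
Qed.

Lemma card_line j x : #|[set y | Rl j x y]| = q.
Proof.
rewrite -[RHS](card_ord q) -(card_imset _ (fun v w (E : upd x j v = upd x j w) =>
   etrans (esym (upd_eq x j v)) (etrans (congr1 (fun z => z j) E) (upd_eq x j w)))).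
apply: eq_card => y; rewrite inE; apply/idP/imsetP.
- by move=> H; exists (y j) => //; apply: Rl_upd.
- move=> [v _ ->]; apply/RlP=> k kj; by rewrite upd_neq.
Qed.

Lemma card_Rj x y :
  #|[set j | Rl j x y]| = if x == y then n else if hadj x y then 1%N else 0%N.
Proof.
have [<-|/eqP xy] := eqVneq x y.
  rewrite -[RHS](card_ord n); apply: eq_card => j; rewrite inE; by apply/RlP.
case: (boolP (hadj x y)) => [/hadjP [i Hi Ey]|nadj].
  apply/eqP/cards1P; exists i; apply/setP=> j; rewrite !inE.
  apply/idP/eqP => [/RlP H|->].
    apply/eqP; apply: contraR Hi => ji; by rewrite H // eq_sym.
  by apply/RlP=> k ki; rewrite Ey upd_neq.
apply/eqP; rewrite cards_eq0; apply/eqP/setP=> j; rewrite !inE.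
apply/negP => H; case: (x j =P y j) => [E|/eqP E].
  apply: xy; apply/ffunP=> k; case: (k =P j) => [->//|/eqP kj].
  by move/RlP: H => ->.
apply/negP: nadj; rewrite negbK; apply/hadjP; exists j; first by rewrite eq_sym.
exact: Rl_upd.
Qed.

Local Open Scope ring_scope.

Lemma lemB (h : hvertex n q -> int) x :
  \sum_j \sum_(y | Rl j x y) h y = h x *+ n + \sum_(y | hadj x y) h y.
Proof.
rewrite (exchange_big_dep predT) //=.
under eq_bigr do rewrite sum_cst card_Rj.
rewrite (bigD1 x) //= eqxx; congr (_ + _).
rewrite big_mkcond [RHS]big_mkcond; apply: eq_bigr => y _ /=.
have [->|yx] := eqVneq y x.
  have -> : hadj x x = false.
    rewrite /hadj; have -> : [set i | x i != x i] = set0 by apply/setP=> i; rewrite !inE eqxx.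
    by rewrite cards0.
  by [].
case: (hadj x y) => //.
Qed.

Definition Sl (g : hvertex n q -> int) j x := \sum_(y | Rl j x y) g y.

Lemma quad (g : hvertex n q -> int) j :
  (q%:R * \sum_x g x * Sl g j x = \sum_x (Sl g j x) ^+ 2).
Proof.
have SE x y : Rl j x y -> Sl g j x = Sl g j y.
  by move=> H; apply: eq_bigl => z; rewrite (Rl_trans z H).
transitivity (\sum_x \sum_(y | Rl j x y) Sl g j y * g y); last first.
  apply: eq_bigr => x _; rewrite expr2 {2}[Sl g j x]/Sl mulr_sumr; apply: eq_bigr => y Hy.
  by rewrite -(SE _ _ Hy).
rewrite (exchange_big_dep predT) //=.
under [RHS]eq_bigr do rewrite sum_cst.
rewrite mulr_sumr; apply: eq_bigr => y _.
have -> : #|[set x | Rl j x y]| = q.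
  transitivity #|[set x | Rl j y x]|; last exact: card_line.
  apply: eq_card => x; by rewrite !inE Rl_sym.
by rewrite mulr_natl mulrC.
Qed.

End Lines.


Section LB.
Variables n q b c : nat.
Variable f : hvertex n q -> bool.
Hypothesis hf : is_bc_coloring b c f.
Hypotheses (hb : 0 < b) (hc : 0 < c) (hq : 0 < q).
Local Open Scope ring_scope.

Definition gg (x : hvertex n q) : int := if f x then b%:Z else - c%:Z.

Lemma split_card (P : pred (hvertex n q)) :
  (#|[set y | P y && f y]| + #|[set y | P y && ~~ f y]| = #|[set y | P y]|)%N.
Proof.
rewrite -(cardsID [set y | f y] [set y | P y]); congr (_ + _)%N; apply: eq_card => y;
by rewrite !inE; case: (P y); case: (f y).
Qed.

Lemma split_sum (P : pred (hvertex n q)) :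
  \sum_(y | P y) gg y = b%:Z * #|[set y | P y && f y]|%:Z - c%:Z * #|[set y | P y && ~~ f y]|%:Z.
Proof.
rewrite (bigID f) /=; congr (_ + _).
  rewrite (eq_bigr (fun _ => b%:Z)); last by move=> y /andP[_ fy]; rewrite /gg fy.
  by rewrite sum_cst -mulr_natr natz.
rewrite (eq_bigr (fun _ => - c%:Z)); last by move=> y /andP[_ /negbTE fy]; rewrite /gg fy.
by rewrite sum_cst -mulr_natr natz mulNr.
Qed.

Lemma deg_eq (x : hvertex n q) : #|[set y | hadj x y]|%:Z + n%:Z = (n * q)%:Z.
Proof.
have := lemB (fun _ => 1) x.
under eq_bigr do rewrite sum_cst card_line.
rewrite sum_cst sumr_const card_ord => E.
have E' : ((q * n)%N%:R : int) = (n + #|[set y | hadj x y]|)%N%:R by rewrite natrM mulr_natr E natrD.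
move/eqP: E'; rewrite eqr_nat => /eqP E2.
rewrite -PoszD; congr Posz; lia.
Qed.

Definition KK : int := (n * q)%:Z - b%:Z - c%:Z.

Lemma eig (x : hvertex n q) : \sum_j Sl gg j x = KK * gg x.
Proof.
have := lemB gg x; rewrite /Sl => ->.
rewrite split_sum.
have D := deg_eq x; have S := split_card (fun y => hadj x y).
case: hf => _ _ H1 H2.
move: D S; set N1 := #|[set y | hadj x y && f y]|; set N2 := #|[set y | hadj x y && ~~ f y]|.
set d := #|[set y | hadj x y]| => D S.
have S' : N1%:Z + N2%:Z = d%:Z by rewrite -PoszD S.
rewrite -mulr_natr natz /gg /KK; case: (boolP (f x)) => fx.
- have E : N2 = b by apply: H1.
  rewrite E in S'. nia.
- have E : N1 = c by apply: H2.
  rewrite E in S'. nia.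
Qed.

Lemma W0 j : 0 <= \sum_x gg x * Sl gg j x.
Proof.
have : 0 <= q%:R * \sum_x gg x * Sl gg j x.
  by rewrite quad; apply: sumr_ge0 => x _; exact: sqr_ge0.
by rewrite pmulr_rge0 // ltr0n.
Qed.

Lemma main_id : KK * \sum_x gg x ^+ 2 = \sum_j \sum_x gg x * Sl gg j x.
Proof.
rewrite exchange_big /= mulr_sumr; apply: eq_bigr => x _.
by rewrite -mulr_sumr eig; ring.
Qed.

Lemma T_pos : 0 < \sum_x gg x ^+ 2.
Proof.
case: hf => [[x fx] _ _ _].
rewrite (bigD1 x) //= ltr_pwDl ?sumr_ge0 // => [|y _]; last exact: sqr_ge0.
by rewrite /gg fx exprn_gt0 // ltr0n.
Qed.

Lemma KK_ge0 : 0 <= KK.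
Proof.
have := T_pos => T0.
have : 0 <= KK * \sum_x gg x ^+ 2 by rewrite main_id; apply: sumr_ge0 => j _; exact: W0.
by rewrite pmulr_lge0.
Qed.

Lemma bound1 : (b + c <= n * q)%N.
Proof. have := KK_ge0; rewrite /KK; lia. Qed.

Lemma bound2 : (b + c = n * q)%N -> forall j x, Sl gg j x = 0.
Proof.
move=> E j x.
have K0 : KK = 0 by rewrite /KK; lia.
have := main_id; rewrite K0 mul0r => /esym/psumr_eq0P H.
have Wj := H (fun j _ => W0 j) j isT.
have := quad gg j; rewrite Wj mulr0 => /esym/psumr_eq0P H2.
have := H2 (fun x _ => sqr_ge0 _) x isT.
by move/eqP; rewrite sqrf_eq0 => /eqP.
Qed.

Lemma bound3 : prime q -> n = q -> (b + c = q * q)%N -> gcdn b c = 1%N -> False.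
Proof.
move=> pq hn E g1.
case: (hf) => [[x fx] _ _ _].
have n0 : (0 < n)%N by rewrite hn.
pose j := Ordinal n0.
have := bound2 ltac:(rewrite hn; exact E) j x.
rewrite /Sl split_sum.
have S := split_card (fun y => Rl j x y).
rewrite card_line in S.
move: S; set m := #|[set y | Rl j x y && f y]|; set m' := #|[set y | Rl j x y && ~~ f y]| => S H.
have H' : (b * m = c * m')%N by lia.
have Hc : (c * q = (q * m) * q)%N by nia.
have Hc' : c = (q * m)%N by apply/eqP; rewrite -(eqn_pmul2r hq) Hc.
have dc : (q %| c)%N by rewrite Hc' dvdn_mulr.
have db : (q %| b)%N.
  by rewrite -(dvdn_addl _ dc) E dvdn_mulr.
have : (q %| gcdn b c)%N by rewrite dvdn_gcd db dc.
by rewrite g1 dvdn1 => /eqP q1; move: pq; rewrite q1.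
Qed.
End LB.


Lemma exA (G : finType) m : m <= #|G| -> exists A : {set G}, #|A| = m.
Proof.
move=> mG; exists [set x in take m (enum G)].
rewrite cardsE (card_uniqP _); last by apply: take_uniq; exact: enum_uniq.
by rewrite size_takel // -cardE.
Qed.

Lemma nonex n q b c : 0 < q -> 0 < b -> 0 < c -> has_bc_coloring n q b c -> b + c <= n * q.
Proof. by move=> hq hb hc [f hf]; apply: (bound1 hf). Qed.

Theorem corollary3 (q b c : nat) (hq : prime q) (hb : 0 < b) (hc : 0 < c) :
  ((b + c) %/ gcdn b c = q -> is_threshold b c q (gcdn b c)) /\
  (gcdn b c = 1 -> b + c = q ^ 2 -> is_threshold b c q q.+1).
Proof.
have q0 := prime_gt0 hq.
have q1 := prime_gt1 hq.
pose x0 n : hvertex n q := [ffun _ => Ordinal q0].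
split.
- move=> E.
  set d := gcdn b c.
  have d0 : 0 < d by rewrite gcdn_gt0 hb.
  have db : d %| b by exact: dvdn_gcdl.
  have dc : d %| c by exact: dvdn_gcdr.
  have Eb : b = d * (b %/ d) by rewrite mulnC divnK.
  have Ec : c = d * (c %/ d) by rewrite mulnC divnK.
  have Eq : b %/ d + c %/ d = q by rewrite -divnDl.
  have c'0 : 0 < c %/ d by rewrite divn_gt0 // dvdn_leq.
  have b'0 : 0 < b %/ d by rewrite divn_gt0 // dvdn_leq.
  split.
  + have [A hA] := @exA 'F_q (c %/ d) ltac:(rewrite card_Fp //; lia).
    have := @constr_col d q _ (@sig1 d q) d (sig1_prop hq) (x0 d) A d0
      ltac:(rewrite hA //) ltac:(rewrite hA card_Fp //; lia).
    rewrite hA card_Fp //.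
    have -> : q - c %/ d = b %/ d by lia.
    by rewrite -Eb -Ec.
  + move=> n nd /(nonex q0 hb hc).
    have : n * q < d * q by rewrite ltn_pmul2r.
    rewrite [in X in X -> _]mulnC.
    have -> : b + c = q * d by rewrite Eb Ec; nia.
    lia.
- move=> g1 E.
  have E' : b + c = q * q by rewrite E expnS expn1.
  split.
  + have [A hA] := @exA ('F_q * 'F_q)%type c ltac:(rewrite card_prod card_Fp //; lia).
    have := @constr_col q.+1 q _ (@sig2 q) 1 (sig2_prop hq) (x0 q.+1) A isT
      ltac:(rewrite hA //) ltac:(rewrite hA card_prod card_Fp //; lia).
    rewrite hA card_prod card_Fp // !mul1n.
    by have -> : q * q - c = b by lia.
  + move=> n nq [f hf].
    have := bound1 hf hb hc q0; rewrite E' => H.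
    have nq' : n = q.
      apply/eqP; rewrite eqn_leq -ltnS nq /=.
      by rewrite -(leq_pmul2r q0).
    exact: (bound3 hf hb hc q0 hq nq' E' g1).
Qed.
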